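(* Let $J_1=\sigma_1/2$, $J_2=\sigma_2/2$ on $\mathbb{C}^2$, and let $\#(x,y)=(\#_{ij}(x,y))_{i,j=1,2}$ be a $2\times2$-matrix-valued tempered distribution on $\mathbb{R}^2$ (components in the standard basis, i.e. the eigenbasis of $\sigma_3$) such that, for every density operator $\rho$, the distribution $P_\rho(x,y)=\mathrm{Tr}[\#(x,y)\rho]$ has the correct marginals: $\int P_\rho(x,y)\,dy=\sum_{\alpha=\pm1/2}\mathrm{Tr}[E_{J_1}(\alpha)\rho]\,\delta(x-\alpha)$ and $\int P_\rho(x,y)\,dx=\sum_{\beta=\pm1/2}\mathrm{Tr}[E_{J_2}(\beta)\rho]\,\delta(y-\beta)$. Then the map $\rho\mapsto P_\rho$ is injective on density operators on $\mathbb{C}^2$ if and only if $\#_{11}\neq\#_{22}$ (as distributions).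
   Context: Pauli matrices: $\sigma_1=\begin{pmatrix}0&1\\1&0\end{pmatrix}$, $\sigma_2=\begin{pmatrix}0&-i\\i&0\end{pmatrix}$, $\sigma_3=\begin{pmatrix}1&0\\0&-1\end{pmatrix}$. $E_{A}(\alpha)$ denotes the orthogonal projection onto the eigenspace of the Hermitian operator $A$ with eigenvalue $\alpha$. A density operator is a positive semidefinite trace-one operator. *)

(* Defs.v *)
From HB Require Import structures.
From mathcomp Require Import all_boot all_order all_algebra.
From mathcomp Require Import all_classical all_reals all_analysis.
From mathcomp Require Import complex.
From Stdlib Require Import ClassicalEpsilon.

Set Implicit Arguments.
Unset Strict Implicit.
Unset Printing Implicit Defensive.

Import Order.TTheory GRing.Theory Num.Theory.
Import numFieldNormedType.Exports.
Local Open Scope ring_scope.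

Section Defs.
Variable R : realType.

Definition cx (x : R) : R[i] := Complex x 0.
Definition iC : R[i] := Complex 0 1.

Definition sigma1 : 'M[R[i]]_2 :=
  \matrix_(i < 2, j < 2) (if i == j then 0 else 1).
Definition sigma2 : 'M[R[i]]_2 :=
  \matrix_(i < 2, j < 2)
    (if i == j then 0 else if i == 0 then - iC else iC).
Definition sigma3 : 'M[R[i]]_2 :=
  \matrix_(i < 2, j < 2)
    (if i == j then (if i == 0 then 1 else -1) else 0).

Definition J1 : 'M[R[i]]_2 := (2%:R)^-1 *: sigma1.
Definition J2 : 'M[R[i]]_2 := (2%:R)^-1 *: sigma2.

Definition adjmx n m (A : 'M[R[i]]_(n, m)) : 'M[R[i]]_(m, n) :=
  map_mx (fun z : R[i] => z^*) A^T.

(* P is the orthogonal projection onto the eigenspace of A for eigenvalue a: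
   a self-adjoint idempotent whose range (= its fixed vectors) is
   ker (A - a). *)
Definition is_eigproj n (A : 'M[R[i]]_n) (a : R[i]) (P : 'M[R[i]]_n) : Prop :=
  [/\ P *m P = P, adjmx P = P &
      forall v : 'cV[R[i]]_n, (P *m v = v) <-> (A *m v = a *: v)].

(* E_A(a): the (unique) such projection, chosen by definite description. *)
Definition eigproj n (A : 'M[R[i]]_n) (a : R[i]) : 'M[R[i]]_n :=
  epsilon (inhabits 0) (is_eigproj A a).

Definition is_density n (rho : 'M[R[i]]_n) : Prop :=
  [/\ adjmx rho = rho,
      (forall v : 'cV[R[i]]_n, 0 <= (adjmx v *m rho *m v) 0 0)
    & \tr rho = 1].

Definition dir (b : bool) : R * R := if b then (1, 0) else (0, 1).

Fixpoint pderiv (s : seq bool) (f : R * R -> R) : R * R -> R :=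
  match s with
  | [::] => f
  | b :: s' => fun p => derive (pderiv s' f) p (dir b)
  end.

Definition schwartz2 (f : R * R -> R) : Prop :=
  [/\ forall s p b, derivable (pderiv s f) p (dir b),
      forall s, continuous (pderiv s f)
    & forall (a b : nat) s, exists M : R, forall p : R * R,
        `|p.1 ^+ a * p.2 ^+ b * pderiv s f p| <= M].

Fixpoint deriv1n (k : nat) (g : R -> R) : R -> R :=
  match k with
  | O => g
  | k'.+1 => fun x => derive (deriv1n k' g) x 1
  end.

Definition schwartz1 (g : R -> R) : Prop :=
  (forall k x, derivable (deriv1n k g) x 1) /\
  (forall (a k : nat), exists M : R, forall x : R,
      `|x ^+ a * deriv1n k g x| <= M).

(* A complex tempered distribution on R^2 is represented by its action on
   real Schwartz test functions (values outside the Schwartz space are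
   irrelevant): R-linear and continuous for the Schwartz topology. *)
Definition tempered (T : (R * R -> R) -> R[i]) : Prop :=
  (forall (c : R) f g, schwartz2 f -> schwartz2 g ->
     T (fun p => c * f p + g p) = cx c * T f + T g) /\
  (exists (C : R) (N : nat), forall f, schwartz2 f -> forall M : R,
     (forall (a b : nat) s p, (a <= N)%N -> (b <= N)%N -> (size s <= N)%N ->
        `|p.1 ^+ a * p.2 ^+ b * pderiv s f p| <= M) ->
     `|T f| <= cx (C * M)).

Definition distr_eq (T T' : (R * R -> R) -> R[i]) : Prop :=
  forall f, schwartz2 f -> T f = T' f.

Definition ccvg (u : nat -> R[i]) (l : R[i]) : Prop :=
  forall e : R, 0 < e -> exists N : nat, forall n, (N <= n)%N ->
    `|u n - l| < cx e.

(* Marginals, via the distributional integral: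
   (int P(x,y) dy)(phi) = lim_{n->oo} P(phi(x) chi(y/n))
   for every Schwartz chi with chi(0) = 1. *)
Definition xmarginal_is (P : (R * R -> R) -> R[i])
    (L : (R -> R) -> R[i]) : Prop :=
  forall phi chi, schwartz1 phi -> schwartz1 chi -> chi 0 = 1 ->
    ccvg (fun n => P (fun p => phi p.1 * chi (p.2 / n.+1%:R))) (L phi).

Definition ymarginal_is (P : (R * R -> R) -> R[i])
    (L : (R -> R) -> R[i]) : Prop :=
  forall phi chi, schwartz1 phi -> schwartz1 chi -> chi 0 = 1 ->
    ccvg (fun n => P (fun p => chi (p.1 / n.+1%:R) * phi p.2)) (L phi).

(* sum_{alpha = +-1/2} Tr[E_A(alpha) rho] delta(. - alpha), as a functional *)
Definition spin_delta (A rho : 'M[R[i]]_2) : (R -> R) -> R[i] :=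
  fun phi => \sum_(a <- [:: (2%:R)^-1; - (2%:R)^-1])
               \tr (eigproj A (cx a) *m rho) * cx (phi a).

(* P_rho = Tr[# rho], with # given by components W i j *)
Definition Pdist (W : 'I_2 -> 'I_2 -> (R * R -> R) -> R[i])
    (rho : 'M[R[i]]_2) : (R * R -> R) -> R[i] :=
  fun f => \sum_(i < 2) \sum_(j < 2) W i j f * rho j i.

End Defs.

(* Main.v *)
Require Import Defs.
From HB Require Import structures.
From mathcomp Require Import all_boot all_order all_algebra.
From mathcomp Require Import all_classical all_reals all_analysis.
From mathcomp Require Import complex.
From mathcomp Require Import ring lra.
From Stdlib Require Import ClassicalEpsilon.
Set Implicit Arguments.
Unset Strict Implicit.
Unset Printing Implicit Defensive.
Import Order.TTheory GRing.Theory Num.Theory.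
Import numFieldNormedType.Exports.
Local Open Scope ring_scope.
Section S.
Variable R : realType.
Definition ek (k x : R) : R := expR (- (k * x ^+ 2)).
Definition gk (k : R) (P : {poly R}) : R -> R := fun x => P.[x] * ek k x.
Definition Dk (k : R) (P : {poly R}) : {poly R} := P^`() - ('X * P) * (k *+ 2)%:P.

Lemma is_derive_ek (k x : R) : is_derive x (1:R) (ek k) (ek k x * (- (k * (x *+ 2)))).
Proof.
have -> : ek k = expR \o (fun x => - (k * x ^+ 2)) by [].
apply: is_derive1_comp.
apply: trigger_derive.
by rewrite [x%:A]mulr1 -mulr2n.
Qed.
Lemma is_derive_gk (k x : R) P : is_derive x (1:R) (gk k P) (gk k (Dk k P) x).
Proof.
have -> : gk k P = (horner P) * (ek k) by [].
apply: trigger_derive.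
rewrite /gk /Dk !hornerE /=.
have sE : forall a b : R, a *: b = a * b by [].
rewrite !sE /ek expr2 !mulrA mulr2n; ring.
Qed.
Lemma ek_ge0 k x : 0 <= ek k x. Proof. exact: expR_ge0. Qed.
Lemma ek_le1 k x : 0 <= k -> ek k x <= 1.
Proof. by move=> k0; rewrite expR_le1 oppr_le0 mulr_ge0// sqr_ge0. Qed.

Lemma powexp_le (y : R) i : 0 <= y -> y ^+ i <= i`!%:R * expR y.
Proof.
move=> y0; case: i => [|n].
  by rewrite expr0 fact0 mul1r -expR0 ler_expR.
have := expR_ge1Dxn n y0.
have f0 : 0 < n.+1`!%:R :> R by rewrite ltr0n fact_gt0.
move=> H; rewrite -ler_pdivrMl//.
apply: le_trans H; rewrite mulrC lerDr //.
Qed.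

Lemma pow_ek_bound k i x : 0 < k -> (x ^+ 2) ^+ i * ek k x <= i`!%:R / k ^+ i.
Proof.
move=> k0; set y := k * x ^+ 2.
have y0 : 0 <= y by rewrite mulr_ge0 ?sqr_ge0 // ltW.
have ki0 : 0 < k ^+ i by rewrite exprn_gt0.
have -> : (x ^+ 2) ^+ i = y ^+ i / k ^+ i.
  by rewrite /y [in RHS]exprMn mulrAC mulfV ?mul1r// gt_eqF.
rewrite /ek; rewrite -/y expRN mulrAC ler_pM2r ?invr_gt0//.
by rewrite ler_pdivrMr ?expR_gt0// powexp_le.
Qed.

Lemma mon_ek_bound k i x : 0 < k -> `|x ^+ i| * ek k x <= 1 + i`!%:R / k ^+ i.
Proof.
move=> k0.
have h1 : `|x ^+ i| <= 1 + (x ^+ 2) ^+ i.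
  rewrite -exprM mulnC exprM -[x ^+ i ^+ 2](real_normK) ?realX ?num_real//.
  have t0 : 0 <= `|x ^+ i| by [].
  nra.
apply: le_trans (ler_wpM2r (ek_ge0 k x) h1) _.
rewrite mulrDl mul1r; apply: lerD; [exact: ek_le1 (ltW k0)|exact: pow_ek_bound].
Qed.

Definition polyB (k : R) (P : {poly R}) : R :=
  \sum_(j < size P) `|P`_j| * (1 + j`!%:R / k ^+ j).

Lemma poly_ek_bound k P x : 0 < k -> `|P.[x] * ek k x| <= polyB k P.
Proof.
move=> k0; rewrite normrM (ger0_norm (ek_ge0 k x)) horner_coef.
apply: le_trans (ler_wpM2r (ek_ge0 k x) (ler_norm_sum _ _ _)) _.
rewrite mulr_suml; apply: ler_sum => j _.
by rewrite normrM -mulrA ler_wpM2l// mon_ek_bound.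
Qed.
Lemma dx (g h : R -> R) (x y dg : R) : is_derive x (1:R) g dg ->
  is_derive (x, y) (dir R true) (fun q : R * R => g q.1 * h q.2) (dg * h y).
Proof.
move=> [gd gv].
have E : (fun t : R => t^-1 *: (((fun q : R * R => g q.1 * h q.2) \o shift (x, y)) (t *: dir R true) - g x * h y))
  = (fun t => (t^-1 *: ((g \o shift x) (t *: 1) - g x)) * h y).
  apply/funext => t /=.
  have sE : forall a b : R, a *: b = a * b by [].
  by rewrite scaler0 add0r !sE; ring.
split.
  rewrite /derivable E.
  by apply: is_cvgM => //; exact: is_cvg_cst.
rewrite /derive E.
rewrite (limM gd (is_cvg_cst _)) lim_cst //.
by congr (_ * _).
Qed.
Lemma dy (g h : R -> R) (x y dh : R) : is_derive y (1:R) h dh ->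
  is_derive (x, y) (dir R false) (fun q : R * R => g q.1 * h q.2) (g x * dh).
Proof.
move=> [hd hv].
have E : (fun t : R => t^-1 *: (((fun q : R * R => g q.1 * h q.2) \o shift (x, y)) (t *: dir R false) - g x * h y))
  = (fun t => g x * (t^-1 *: ((h \o shift y) (t *: 1) - h y))).
  apply/funext => t /=.
  have sE : forall a b : R, a *: b = a * b by [].
  by rewrite scaler0 add0r !sE; ring.
split.
  rewrite /derivable E.
  by apply: is_cvgM => //; exact: is_cvg_cst.
rewrite /derive E.
rewrite (limM (is_cvg_cst _) hd) lim_cst //.
by congr (_ * _).
Qed.

Lemma derive_gk k P x : 'D_(1:R) (gk k P) x = gk k (Dk k P) x.
Proof. by have [] := is_derive_gk k x P. Qed.

Lemma deriv1n_gk k P n : deriv1n n (gk k P) = gk k (iter n (Dk k) P).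
Proof.
elim: n => [//|n IH] /=.
by apply/funext => x; rewrite IH derive_gk.
Qed.

Lemma gk_cont k P : continuous (gk k P).
Proof.
move=> x; apply/differentiable_continuous/derivable1_diffP.
by have [] := is_derive_gk k x P.
Qed.

Lemma gk_bound k P a : 0 < k -> forall x, `|x ^+ a * gk k P x| <= polyB k ('X^a * P).
Proof.
move=> k0 x; rewrite /gk mulrA.
have -> : x ^+ a * P.[x] = ('X^a * P).[x] by rewrite hornerM hornerXn.
exact: poly_ek_bound.
Qed.

Lemma schwartz1_gk k P : 0 < k -> schwartz1 (gk k P).
Proof.
move=> k0; split.
  move=> n x; rewrite deriv1n_gk.
  by have [] := is_derive_gk k x (iter n (Dk k) P).
move=> a n; exists (polyB k ('X^a * iter n (Dk k) P)) => x.
rewrite deriv1n_gk; exact: gk_bound.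
Qed.

Definition Fp k1 P k2 Q : R * R -> R := fun q => gk k1 P q.1 * gk k2 Q q.2.

Lemma pderiv_Fp s : forall k1 k2 P Q, exists P' Q',
  pderiv s (Fp k1 P k2 Q) = Fp k1 P' k2 Q'.
Proof.
elim: s => [|b s IH] k1 k2 P Q; first by exists P, Q.
have [P' [Q' E]] := IH k1 k2 P Q.
case: b.
  exists (Dk k1 P'), Q'; apply/funext => -[x y] /=; rewrite E.
  have [_ ->] := dx (gk k2 Q') y (is_derive_gk k1 x P').
  by [].
exists P', (Dk k2 Q'); apply/funext => -[x y] /=; rewrite E.
have [_ ->] := dy (gk k1 P') x (is_derive_gk k2 y Q').
by [].
Qed.

Lemma Fp_derivable k1 k2 P Q p b : derivable (Fp k1 P k2 Q) p (dir R b).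
Proof.
case: p => x y; case: b.
  by have [] := dx (gk k2 Q) y (is_derive_gk k1 x P).
by have [] := dy (gk k1 P) x (is_derive_gk k2 y Q).
Qed.

Lemma Fp_cont k1 k2 P Q : continuous (Fp k1 P k2 Q).
Proof.
have -> : Fp k1 P k2 Q = (fun q => gk k1 P q.1) \* (fun q => gk k2 Q q.2) by [].
move=> q; apply: continuousM.
  apply: (@continuous_comp _ _ _ fst (gk k1 P)); last exact: gk_cont.
  exact: cvg_fst.
apply: (@continuous_comp _ _ _ snd (gk k2 Q)); last exact: gk_cont.
exact: cvg_snd.
Qed.

Lemma schwartz2_Fp k1 k2 P Q : 0 < k1 -> 0 < k2 -> schwartz2 (Fp k1 P k2 Q).
Proof.
move=> k10 k20; split.
- move=> s p b; have [P' [Q' ->]] := pderiv_Fp s k1 k2 P Q.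
  exact: Fp_derivable.
- move=> s; have [P' [Q' ->]] := pderiv_Fp s k1 k2 P Q.
  exact: Fp_cont.
- move=> a b s; have [P' [Q' ->]] := pderiv_Fp s k1 k2 P Q.
  exists (polyB k1 ('X^a * P') * polyB k2 ('X^b * Q')) => -[x y] /=.
  rewrite /Fp /= mulrACA normrM.
  apply: ler_pM => //; exact: gk_bound.
Qed.
End S.
Section A.
Variable R : realType.
Local Notation C := (R[i]).

Lemma sum2 (F : 'I_2 -> C) : \sum_(i < 2) F i = F ord0 + F ord_max.
Proof. by rewrite big_ord_recr big_ord1 /=; congr (F _ + _); apply: val_inj. Qed.

Lemma ord2 (i : 'I_2) : i = ord0 \/ i = ord_max.
Proof. by case: i => -[|[|//]] Hi; [left|right]; apply: val_inj. Qed.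

Lemma adjmxE n m (A : 'M[C]_(n, m)) i j : adjmx A i j = (A j i)^*.
Proof. by rewrite /adjmx !mxE. Qed.

Lemma adjmx_mul n m p (A : 'M[C]_(n, m)) (B : 'M[C]_(m, p)) :
  adjmx (A *m B) = adjmx B *m adjmx A.
Proof. by rewrite /adjmx trmx_mul map_mxM. Qed.

Lemma mx_ext n (M N : 'M[C]_n) : (forall u : 'cV[C]_n, M *m u = N *m u) -> M = N.
Proof.
move=> H; apply/matrixP => i j.
have := congr1 (fun v : 'cV[C]_n => v i 0) (H (delta_mx j 0)).
by rewrite /= -!colE !mxE.
Qed.

Lemma eigproj_uniq n (A : 'M[C]_n) a P Q :
  is_eigproj A a P -> is_eigproj A a Q -> P = Q.
Proof.
move=> [PP Pa Pv] [QQ Qa Qv].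
have QP : Q *m P = P.
  apply: mx_ext => u; rewrite -mulmxA; apply/Qv/Pv.
  by rewrite mulmxA PP.
have PQ : P *m Q = Q.
  apply: mx_ext => u; rewrite -mulmxA; apply/Pv/Qv.
  by rewrite mulmxA QQ.
by rewrite -Pa -QP adjmx_mul Pa Qa PQ.
Qed.

Lemma eigprojE n (A : 'M[C]_n) a P : is_eigproj A a P -> eigproj A a = P.
Proof.
move=> HP; apply: (eigproj_uniq _ HP).
rewrite /eigproj; apply: epsilon_spec; by exists P.
Qed.
Local Notation h := ((2%:R : C)^-1).

Lemma cjM (x y : C) : (x * y)^* = x^* * y^*. Proof. exact: rmorphM. Qed.
Lemma cjD (x y : C) : (x + y)^* = x^* + y^*. Proof. exact: rmorphD. Qed.
Lemma cjN (x : C) : (- x)^* = - x^*. Proof. exact: rmorphN. Qed.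
Lemma cjB (x y : C) : (x - y)^* = x^* - y^*. Proof. exact: rmorphB. Qed.
Lemma cjn n : (n%:R : C)^* = n%:R. Proof. exact: rmorph_nat. Qed.
Lemma cjV (x : C) : (x^-1)^* = (x^*)^-1. Proof. exact: fmorphV. Qed.

Lemma cj0 : (0 : C)^* = 0. Proof. exact: rmorph0. Qed.
Lemma cj1 : (1 : C)^* = 1. Proof. exact: rmorph1. Qed.

Lemma two_neq0 : (2%:R : C) != 0.
Proof. by rewrite pnatr_eq0. Qed.

Lemma h_conj : h^* = h.
Proof. by rewrite cjV cjn. Qed.

Lemma eig_sigma (S : 'M[C]_2) (s : C) : S *m S = 1%:M ->
  (forall i j, (S j i)^* = S i j) -> s * s = 1 -> s^* = s ->
  is_eigproj (h *: S) (h * s) (h *: (1%:M + s *: S)).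
Proof.
move=> SS Sa ss sc; split.
- rewrite -scalemxAl -scalemxAr scalerA mulmxDl !mulmxDr !mul1mx mulmx1.
  rewrite -!scalemxAl -!scalemxAr !scalerA SS ss.
  apply/matrixP => i j; rewrite !mxE.
  by field.
- apply/matrixP => i j; rewrite adjmxE !mxE cjM cjD cjM h_conj sc Sa.
  by rewrite eq_sym; case: (i == j); rewrite /= ?conjC1 ?conjC0.
- move=> v; rewrite -scalemxAl mulmxDl mul1mx -scalemxAl.
  have hv : forall w : 'cV[C]_2, h *: w = v <-> w = 2%:R *: v.
    move=> w; split => [<-|->]; rewrite scalerA ?mulfV ?mulVf ?scale1r //; exact: two_neq0.
  rewrite hv -scalemxAl; set w := S *m v.
  split => [E|E].
  + have E1 : s *: w = v.
      by apply: (addrI v); rewrite E scaler_nat mulr2n.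
    have E2 : w = s *: v by rewrite -E1 scalerA ss scale1r.
    by rewrite E2 scalerA.
  + have E2 : w = s *: v.
      have := congr1 (fun x => 2%:R *: x) E.
      by rewrite /= !scalerA mulrA mulfV ?two_neq0 // !mul1r scale1r.
    by rewrite E2 scalerA ss scale1r scaler_nat mulr2n.
Qed.
Local Notation i0 := (ord0 : 'I_2).
Local Notation i1 := (ord_max : 'I_2).

Lemma cx_h : cx (2^-1 : R) = h.
Proof.
have -> : cx (2^-1 : R) = real_complex R (2^-1 : R) by [].
by rewrite fmorphV rmorph_nat.
Qed.

Lemma cx_mh : cx (- 2^-1 : R) = h * -1.
Proof.
have -> : cx (- 2^-1 : R) = real_complex R (- 2^-1 : R) by [].
by rewrite rmorphN fmorphV rmorph_nat mulrN1.
Qed.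

Lemma sigma1_sq : sigma1 R *m sigma1 R = 1%:M.
Proof.
apply/matrixP => i j; rewrite !mxE sum2 !mxE.
by case: (ord2 i) => ->; case: (ord2 j) => ->; rewrite /= ?mulr0 ?mul0r ?mulr1 ?addr0 ?add0r.
Qed.

Lemma iC2 : iC R * iC R = -1.
Proof. by rewrite -expr2 sqr_i. Qed.

Lemma sigma2_sq : sigma2 R *m sigma2 R = 1%:M.
Proof.
apply/matrixP => i j; rewrite !mxE sum2 !mxE.
case: (ord2 i) => ->; case: (ord2 j) => ->; rewrite /= ?mulr0 ?mul0r ?mulr1 ?addr0 ?add0r //;
  by rewrite ?mulNr ?mulrN iC2 opprK.
Qed.

Lemma cj_iC : (iC R)^* = - iC R.
Proof. rewrite /iC; apply/eqP; by rewrite eq_complex /= oppr0 !eqxx. Qed.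

Lemma sigma1_adj i j : (sigma1 R j i)^* = sigma1 R i j.
Proof.
rewrite !mxE eq_sym; case: (i == j); by rewrite ?cj0 ?cj1.
Qed.

Lemma sigma2_adj i j : (sigma2 R j i)^* = sigma2 R i j.
Proof.
rewrite !mxE; case: (ord2 i) => ->; case: (ord2 j) => ->; rewrite /= ?cj0 //.
  by rewrite cj_iC.
  by rewrite cjN cj_iC opprK.
Qed.
Lemma E1p : eigproj (J1 R) (cx (2^-1)) = h *: (1%:M + 1 *: sigma1 R).
Proof.
apply: eigprojE; rewrite cx_h -[X in is_eigproj _ X](mulr1 h).
exact: (eig_sigma sigma1_sq sigma1_adj (mulr1 1) cj1).
Qed.
Lemma E1m : eigproj (J1 R) (cx (- 2^-1)) = h *: (1%:M + (-1) *: sigma1 R).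
Proof.
apply: eigprojE; rewrite cx_mh.
by apply: (eig_sigma sigma1_sq sigma1_adj); rewrite ?mulrNN ?mulr1 ?cjN ?cj1.
Qed.
Lemma E2p : eigproj (J2 R) (cx (2^-1)) = h *: (1%:M + 1 *: sigma2 R).
Proof.
apply: eigprojE; rewrite cx_h -[X in is_eigproj _ X](mulr1 h).
exact: (eig_sigma sigma2_sq sigma2_adj (mulr1 1) cj1).
Qed.
Lemma E2m : eigproj (J2 R) (cx (- 2^-1)) = h *: (1%:M + (-1) *: sigma2 R).
Proof.
apply: eigprojE; rewrite cx_mh.
by apply: (eig_sigma sigma2_sq sigma2_adj); rewrite ?mulrNN ?mulr1 ?cjN ?cj1.
Qed.

Lemma i01 : (i0 == i1) = false. Proof. by []. Qed.
Lemma i10 : (i1 == i0) = false. Proof. by []. Qed.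

Lemma bT : ((true : nat)%:R : C) = 1. Proof. by []. Qed.
Lemma bF : ((false : nat)%:R : C) = 0. Proof. by []. Qed.

Lemma tr_formula (S rho : 'M[C]_2) (s : C) :
  \tr ((h *: (1%:M + s *: S)) *m rho) =
  h * (rho i0 i0 + rho i1 i1 + s * (S i0 i0 * rho i0 i0 + S i0 i1 * rho i1 i0
        + S i1 i0 * rho i0 i1 + S i1 i1 * rho i1 i1)).
Proof.
rewrite /mxtrace sum2 !mxE !sum2 !mxE !eqxx i01 i10 bT bF.
ring.
Qed.
Lemma spin1E (rho : 'M[C]_2) phi : spin_delta (J1 R) rho phi =
  h * (rho i0 i0 + rho i1 i1 + (rho i0 i1 + rho i1 i0)) * cx (phi (2^-1)) +
  h * (rho i0 i0 + rho i1 i1 - (rho i0 i1 + rho i1 i0)) * cx (phi (- 2^-1)).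
Proof.
rewrite /spin_delta big_cons big_cons big_nil addr0 E1p E1m !tr_formula.
rewrite !mxE !eqxx i01 i10.
ring.
Qed.

Lemma spin2E (rho : 'M[C]_2) phi : spin_delta (J2 R) rho phi =
  h * (rho i0 i0 + rho i1 i1 + iC R * (rho i0 i1 - rho i1 i0)) * cx (phi (2^-1)) +
  h * (rho i0 i0 + rho i1 i1 - iC R * (rho i0 i1 - rho i1 i0)) * cx (phi (- 2^-1)).
Proof.
rewrite /spin_delta big_cons big_cons big_nil addr0 E2p E2m !tr_formula.
rewrite !mxE !eqxx i01 i10.

ring.
Qed.
Lemma ccvg_uniq (u v : nat -> C) L L' : ccvg u L -> ccvg v L' ->
  (forall n, u n = v n) -> L = L'.
Proof.
move=> HL HL' uv; case: (eqVneq L L') => // ne.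
set d := `|L - L'|.
have d0 : 0 < d by rewrite normr_gt0 subr_eq0.
have dr : d \is Num.real by exact: normr_real.
have e0 : 0 < (complex.Re d) / 2.
  move: d0; rewrite ltcE => /andP[_ H]; by rewrite divr_gt0.
have de : cx (complex.Re d / 2) + cx (complex.Re d / 2) = d.
  rewrite -[RHS](RRe_real dr).
  apply/eqP; rewrite eq_complex /= addr0 eqxx andbT.
  by apply/eqP; rewrite -splitr.
have [N1 H1] := HL _ e0; have [N2 H2] := HL' _ e0.
have := H1 (maxn N1 N2) (leq_maxl _ _); have := H2 (maxn N1 N2) (leq_maxr _ _).
rewrite -uv => h2 h1.
have : d < d.
  rewrite -[X in _ < X]de.
  apply: le_lt_trans (ltrD h1 h2).
  rewrite /d -(normrN (u _ - L)) (_ : L - L' = - (u (maxn N1 N2) - L) + (u (maxn N1 N2) - L')).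
    exact: ler_normD.
  ring.
by rewrite ltxx.
Qed.
Definition Dm (b : 'I_2) : 'M[C]_2 := \matrix_(i, j) (((i == b) && (j == b))%:R).

Lemma Dm_density b : is_density (Dm b).
Proof.
split.
- by apply/matrixP => i j; rewrite !mxE cjn andbC.
- move=> v; rewrite /Dm !mxE !sum2 !mxE !sum2 !mxE.
  case: (ord2 b) => ->; rewrite !eqxx ?i01 ?i10 /= !(mulr0, mul0r, addr0, add0r, mulr1) mulrC;
  exact: mul_conjC_ge0.
- rewrite /Dm /mxtrace sum2 !mxE.
  by case: (ord2 b) => ->; rewrite !eqxx ?i01 ?i10 /= ?addr0 ?add0r.
Qed.
End A.

Section M.
Variable R : realType.
Local Notation C := (R[i]).

Lemma cxE (x : R) : cx x = real_complex R x. Proof. by []. Qed.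
Lemma cxB (x y : R) : cx x - cx y = cx (x - y).
Proof. by rewrite !cxE rmorphB. Qed.
Lemma cx_neq0 (x : R) : x != 0 -> cx x != 0.
Proof. by move=> x0; rewrite eq_complex /= negb_and x0. Qed.
Lemma iC_neq0 : iC R != 0.
Proof. by rewrite eq_complex /= oner_eq0 andbF. Qed.

Lemma Pdist_Dm0 (W : 'I_2 -> 'I_2 -> (R * R -> R) -> C) f :
  Pdist W (Dm R ord0) f = W ord0 ord0 f.
Proof.
rewrite /Pdist !sum2 /Dm !mxE !eqxx ?i01 ?i10 /=.
by rewrite !(mulr0, mul0r, addr0, add0r, mulr1).
Qed.
Lemma Pdist_Dm1 (W : 'I_2 -> 'I_2 -> (R * R -> R) -> C) f :
  Pdist W (Dm R ord_max) f = W ord_max ord_max f.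
Proof.
rewrite /Pdist !sum2 /Dm !mxE !eqxx ?i01 ?i10 /=.
by rewrite !(mulr0, mul0r, addr0, add0r, mulr1).
Qed.
End M.

Theorem lemma2 (R : realType) (W : 'I_2 -> 'I_2 -> (R * R -> R) -> R[i]) :
  (forall i j, tempered (W i j)) ->
  (forall rho : 'M[R[i]]_2, is_density rho ->
     xmarginal_is (Pdist W rho) (spin_delta (J1 R) rho) /\
     ymarginal_is (Pdist W rho) (spin_delta (J2 R) rho)) ->
  ((forall rho rho' : 'M[R[i]]_2, is_density rho -> is_density rho' ->
      distr_eq (Pdist W rho) (Pdist W rho') -> rho = rho') <->
   ~ distr_eq (W ord0 ord0) (W ord_max ord_max)).
Proof.
move=> _ Hmarg; split.
  move=> inj Heq.
  have H : distr_eq (Pdist W (Dm R ord0)) (Pdist W (Dm R ord_max)).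
    by move=> f fs; rewrite Pdist_Dm0 Pdist_Dm1 Heq.
  have := inj _ _ (Dm_density R ord0) (Dm_density R ord_max) H.
  move=> /matrixP /(_ ord0 ord0); rewrite /Dm !mxE !eqxx i01 /=.
  by move/eqP; rewrite oner_eq0.
move=> nW rho rho' Hr Hr' Heq.
have [_ _ Htr] := Hr; have [_ _ Htr'] := Hr'.
have hb : rho ord_max ord_max = 1 - rho ord0 ord0.
  by rewrite -Htr /mxtrace sum2 addrC addKr.
have hb' : rho' ord_max ord_max = 1 - rho' ord0 ord0.
  by rewrite -Htr' /mxtrace sum2 addrC addKr.
pose phi := gk 1 ('X : {poly R}).
pose chi := gk 1 (1 : {poly R}).
have sphi : schwartz1 phi by exact: schwartz1_gk ltr01.
have schi : schwartz1 chi by exact: schwartz1_gk ltr01.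
have chi0 : chi 0 = 1.
  by rewrite /chi /gk /ek hornerC expr2 mul0r mulr0 oppr0 expR0 mulr1.
have cpos : forall n : nat, 0 < ((n.+1%:R : R) ^+ 2)^-1.
  by move=> n; rewrite invr_gt0 exprn_gt0 // ltr0n.
have chiE : forall (n : nat) (y : R), chi (y / n.+1%:R) = gk ((n.+1%:R ^+ 2)^-1) 1 y.
  move=> n y; rewrite /chi /gk /ek !hornerC; congr (_ * expR (- _)).
  by rewrite mul1r expr_div_n mulrC.
have sfx : forall n : nat, schwartz2 (fun p : R * R => phi p.1 * chi (p.2 / n.+1%:R)).
  move=> n; have -> : (fun p : R * R => phi p.1 * chi (p.2 / n.+1%:R)) =
     Fp 1 'X ((n.+1%:R ^+ 2)^-1) 1 by apply/funext => p; rewrite /Fp chiE.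
  exact: schwartz2_Fp.
have sfy : forall n : nat, schwartz2 (fun p : R * R => chi (p.1 / n.+1%:R) * phi p.2).
  move=> n; have -> : (fun p : R * R => chi (p.1 / n.+1%:R) * phi p.2) =
     Fp ((n.+1%:R ^+ 2)^-1) 1 1 'X by apply/funext => p; rewrite /Fp chiE.
  exact: schwartz2_Fp.
have E1 : spin_delta (J1 R) rho phi = spin_delta (J1 R) rho' phi.
  apply: (ccvg_uniq ((Hmarg rho Hr).1 phi chi sphi schi chi0)
                    ((Hmarg rho' Hr').1 phi chi sphi schi chi0)).
  by move=> n; apply: Heq.
have E2 : spin_delta (J2 R) rho phi = spin_delta (J2 R) rho' phi.
  apply: (ccvg_uniq ((Hmarg rho Hr).2 phi chi sphi schi chi0)
                    ((Hmarg rho' Hr').2 phi chi sphi schi chi0)).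
  by move=> n; apply: Heq.
rewrite !spin1E hb hb' in E1; rewrite !spin2E hb hb' in E2.
set p := cx (phi 2^-1) in E1 E2; set m := cx (phi (- 2^-1)) in E1 E2.
have pm0 : (2%:R)^-1 * (p - m) != 0.
  rewrite mulf_eq0 negb_or invr_eq0 pnatr_eq0 /=.
  rewrite /p /m cxB; apply: cx_neq0.
  rewrite /phi /gk !hornerX /ek sqrrN -mulrBl.
  have -> : (2^-1 - - 2^-1 : R) = 1.
    by field.
  by rewrite mul1r gt_eqF // expR_gt0.
move/eqP: E1; rewrite -subr_eq0 => /eqP E1.
move/eqP: E2; rewrite -subr_eq0 => /eqP E2.
set c := rho ord0 ord_max in E1 E2 *; set d := rho ord_max ord0 in E1 E2 *.
set c' := rho' ord0 ord_max in E1 E2 *; set d' := rho' ord_max ord0 in E1 E2 *.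
have K1 : (c + d - (c' + d')) * ((2%:R)^-1 * (p - m)) = 0 by rewrite -E1; ring.
have K2 : (iC R * (c - d - (c' - d'))) * ((2%:R)^-1 * (p - m)) = 0 by rewrite -E2; ring.
move/eqP: K1; rewrite mulf_eq0 (negbTE pm0) orbF => /eqP K1.
move/eqP: K2; rewrite mulf_eq0 (negbTE pm0) orbF mulf_eq0 (negbTE (iC_neq0 R)) /= => /eqP K2.
have ec : c = c'.
  apply/eqP; rewrite -subr_eq0; apply/eqP.
  have -> : c - c' = (2%:R)^-1 * ((c + d - (c' + d')) + (c - d - (c' - d'))) by field.
  by rewrite K1 K2 addr0 mulr0.
have ed : d = d'.
  apply/eqP; rewrite -subr_eq0; apply/eqP.
  have -> : d - d' = (2%:R)^-1 * ((c + d - (c' + d')) - (c - d - (c' - d'))) by field.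
  by rewrite K1 K2 subr0 mulr0.
have ea : rho ord0 ord0 = rho' ord0 ord0.
  case: (eqVneq (rho ord0 ord0) (rho' ord0 ord0)) => // ne.
  exfalso; apply: nW => f fs.
  have := Heq f fs; rewrite /Pdist !sum2 hb hb' -/c -/d -/c' -/d' ec ed.
  move/eqP; rewrite -subr_eq0 => /eqP E.
  have : (rho ord0 ord0 - rho' ord0 ord0) * (W ord0 ord0 f - W ord_max ord_max f) = 0.
    by rewrite -E; ring.
  move/eqP; rewrite mulf_eq0 subr_eq0 (negbTE ne) /= subr_eq0 => /eqP //.
apply/matrixP => i j.
case: (ord2 i) => ->; case: (ord2 j) => ->.
- exact: ea.
- exact: ec.
- exact: ed.
- by rewrite hb hb' ea.
Qed.
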